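(* For a graphical sequence $\pi$ of length $n$ define $h(\pi)=g(\overline{\pi})$. Then: (i) every realization $G$ of $\pi$ satisfies $\chi(G)\ge\omega(G)\ge h(\pi)$; (ii) $h$ is monotone increasing: if $\pi\le\pi'$ termwise (both graphical of length $n$) then $h(\pi)\le h(\pi')$; (iii) there is a graphical sequence $\pi'\ge\pi$ (termwise) of length $n$ having a realization that is a complete $h(\pi)$-partite graph, so that $\omega$ and $\chi$ of this realization both equal $h(\pi)$.
   Context: Graphs are finite and simple; a graphical sequence is a nondecreasing integer sequence that is the degree sequence of some graph (a realization). For $\pi=(d_1\le\cdots\le d_n)$, $\overline{\pi}=((n-1)-d_n\le\cdots\le(n-1)-d_1)$ is the complementary sequence. For a graphical sequence $(e_1\le\cdots\le e_n)$ define $f(1)=e_1$ with index $j_1=1$; if $f(i)=e_{j_i}$ is finite and $j_i+f(i)+1\le n$ set $j_{i+1}=j_i+f(i)+1$, $f(i+1)=e_{j_{i+1}}$, otherwise $f(i+1)=\infty$; once $\infty$, it stays $\infty$. Let $g$ of that sequence be $\max\{i\in\mathbb{Z}^+: f(i)<\infty\}$. It is known (Murphy) that every realization of a graphical sequence $\sigma$ has independence number at least $g(\sigma)$. $\omega$ is clique number and $\chi$ chromatic number. *)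

(* Defs.v *)
From mathcomp Require Import all_boot.
Set Implicit Arguments. Unset Strict Implicit. Unset Printing Implicit Defensive.

Definition simple_graph (n : nat) (G : rel 'I_n) : Prop :=
  irreflexive G /\ symmetric G.

Definition deg (n : nat) (G : rel 'I_n) (x : 'I_n) : nat := #|[set y | G x y]|.

Definition degseq (n : nat) (G : rel 'I_n) : seq nat :=
  sort leq [seq deg G x | x <- enum 'I_n].

Definition realizes (n : nat) (G : rel 'I_n) (pi : seq nat) : Prop :=
  simple_graph G /\ degseq G = pi.

Definition graphical (pi : seq nat) : Prop :=
  exists G : rel 'I_(size pi), realizes G pi.

Definition compl_seq (pi : seq nat) : seq nat :=
  rev [seq (size pi).-1 - d | d <- pi].

(* Murphy's g, 0-based positions: p_1 = 0, f(i) = e_{p_i},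
   p_{i+1} = p_i + f(i) + 1 as long as p_{i+1} < n. g counts the finite f(i).
   Fuel = size s suffices as positions strictly increase. *)
Fixpoint gcount (s : seq nat) (fuel p : nat) : nat :=
  match fuel with
  | 0 => 0
  | k.+1 => if p < size s then (gcount s k (p + nth 0 s p).+1).+1 else 0
  end.

Definition g (s : seq nat) : nat := gcount s (size s) 0.

Definition h (pi : seq nat) : nat := g (compl_seq pi).

Definition is_clique (n : nat) (G : rel 'I_n) (A : {set 'I_n}) : bool :=
  [forall x in A, forall y in A, (x != y) ==> G x y].

Definition omega (n : nat) (G : rel 'I_n) : nat :=
  \max_(A : {set 'I_n} | is_clique G A) #|A|.

(* chromatic number: least k admitting a proper k-colouring (k = n always works) *)
Definition colorable (n : nat) (G : rel 'I_n) (k : nat) : bool :=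
  [exists f : {ffun 'I_n -> 'I_k}, [forall x, forall y, G x y ==> (f x != f y)]].

Definition chi (n : nat) (G : rel 'I_n) : nat :=
  \big[minn/n]_(k < n.+1 | colorable G k) k.

Definition complete_multipartite (n : nat) (G : rel 'I_n) (k : nat) : Prop :=
  exists p : 'I_n -> 'I_k,
    (forall c : 'I_k, exists x, p x = c) /\ (forall x y, G x y = (p x != p y)).

(* Main.v *)
Require Import Defs.
From mathcomp Require Import all_boot zify.
Set Implicit Arguments. Unset Strict Implicit. Unset Printing Implicit Defensive.

Lemma card_cnt (T:finType) (P: pred T) : #|[set x | P x]| = count P (enum T).
Proof. rewrite cardsE cardE /enum_mem size_filter /enum_mem count_filter. apply: eq_count => x. by rewrite !inE andbT. Qed.

Lemma sorted_nth_le (s : seq nat) i j : sorted leq s -> i <= j -> j < size s ->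
  nth 0 s i <= nth 0 s j.
Proof.
move=> ss ij js; apply: (sorted_leq_nth leq_trans leqnn 0 ss) => //; rewrite inE //.
exact: leq_ltn_trans ij js.
Qed.

Lemma count_ge_sorted (s : seq nat) q : sorted leq s -> q < size s ->
  size s - q <= count (fun d => nth 0 s q <= d) s.
Proof.
move=> ss qs.
have -> : count (leq (nth 0 s q)) s = count (leq (nth 0 s q)) (take q s) + count (leq (nth 0 s q)) (drop q s) by rewrite -count_cat cat_take_drop.
have: count (leq (nth 0 s q)) (drop q s) = size (drop q s).
  apply/eqP; rewrite -all_count; apply/(all_nthP 0) => i; rewrite size_drop => iq.
  rewrite nth_drop; apply: sorted_nth_le => //; [lia| lia].
rewrite size_drop => ->; lia.
Qed.

Lemma sorted_ge_count (t : seq nat) k c : sorted leq t -> k < size t ->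
  size t - k <= count (fun d => c <= d) t -> c <= nth 0 t k.
Proof.
move=> st kt H; rewrite leqNgt; apply/negP => lt; move: H.
have -> : count (leq c) t = count (leq c) (take k.+1 t) + count (leq c) (drop k.+1 t) by rewrite -count_cat cat_take_drop.
have -> : count (fun d => c <= d) (take k.+1 t) = 0.
  apply/eqP; rewrite -leqn0 leqNgt -has_count -all_predC; apply/(all_nthP 0) => i.
  rewrite size_take => ik; have ik' : i < k.+1 by move: ik; case: ifP => hh; lia.
  rewrite /= nth_take // -ltnNge.
  apply: leq_ltn_trans lt; apply: sorted_nth_le => //; lia.
have := count_size (leq c) (drop k.+1 t); rewrite size_drop => h1; rewrite add0n => h2; have := leq_trans h2 h1; lia.
Qed.

Lemma card_interval n (A : {set 'I_n}) L m :
  (forall x : 'I_n, x \in A -> L <= x < L + m) -> #|A| <= m.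
Proof.
move=> H; rewrite cardE -(size_map val) -[m](size_iota L).
apply: uniq_leq_size; first by rewrite map_inj_uniq ?enum_uniq //; exact: val_inj.
move=> y /mapP [x]; rewrite mem_enum => xA ->; rewrite mem_iota; exact: H.
Qed.

Lemma all2_leq_nth (s t : seq nat) :
  all2 leq s t = (size s == size t) && [forall i : 'I_(size s), nth 0 s i <= nth 0 t i].
Proof.
elim: s t => [|x s IH] [|y t] //=.
  by symmetry; apply/forallP => -[].
rewrite IH eqSS; case: (size s =P size t) => /= _; last by rewrite andbF.
apply/andP/forallP.
  case=> xy /forallP Hf i; case: i => [[|i] Hi] //=; exact: (Hf (Ordinal (Hi : i < size s))).
move=> Hf; split; first exact: (Hf ord0).
apply/forallP => i; exact: (Hf (lift ord0 i)).
Qed.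


Lemma deg_le n (G : rel 'I_n) x : simple_graph G -> deg G x <= n.-1.
Proof.
case=> irr _; rewrite /deg; have := cardsC1 x; rewrite card_ord => <-; apply: subset_leq_card.
apply/subsetP => y; rewrite !inE; apply: contraTN => /eqP ->; by rewrite irr.
Qed.

Lemma degseq_sorted n (G : rel 'I_n) : sorted leq (degseq G).
Proof. exact: (sort_sorted leq_total). Qed.

Lemma size_degseq n (G : rel 'I_n) : size (degseq G) = n.
Proof. by rewrite /degseq size_sort size_map size_enum_ord. Qed.

Lemma count_degseq n (G : rel 'I_n) (P : pred nat) :
  count P (degseq G) = #|[set x | P (deg G x)]|.
Proof.
have /permP -> : perm_eq (degseq G) (map (deg G) (enum 'I_n)) by rewrite /degseq perm_sort.
by rewrite count_map card_cnt.
Qed.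

Lemma size_compl pi : size (compl_seq pi) = size pi.
Proof. by rewrite /compl_seq size_rev size_map. Qed.

Lemma nth_compl pi j : j < size pi ->
  nth 0 (compl_seq pi) j = (size pi).-1 - nth 0 pi (size pi - j.+1).
Proof.
move=> js; rewrite /compl_seq nth_rev size_map // (nth_map 0) //; lia.
Qed.

Lemma murphy n (G : rel 'I_n) : simple_graph G -> forall (fuel p : nat) (W : {set 'I_n}),
  #|~: W| <= p -> exists A : {set 'I_n}, [/\ A \subset W, is_clique G A &
     gcount (compl_seq (degseq G)) fuel p <= #|A|].
Proof.
move=> sG; have [irr sym] := sG.
have sz : size (degseq G) = n by exact: size_degseq.
elim=> [|k IH] p W Wp.
  exists set0; split => //; [exact: sub0set | by apply/forallP => x; rewrite inE].
rewrite /= size_compl sz.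
case: ltnP => pn; last first.
  exists set0; split => //; [exact: sub0set | by apply/forallP => x; rewrite inE].
set c := nth 0 (degseq G) (n - p.+1).
have [v /andP [vW cv]] : exists v, (v \in W) && (c <= deg G v).
  apply/existsP; apply: contraT; rewrite negb_exists => /forallP H.
  have : #|[set x | c <= deg G x]| <= p.
    apply: leq_trans Wp; apply: subset_leq_card; apply/subsetP => x; rewrite !inE.
    by move=> cx; move: (H x); rewrite cx andbT.
  rewrite -count_degseq.
  have := count_ge_sorted (degseq_sorted G) (_ : n - p.+1 < size (degseq G)).
  rewrite sz => /(_ ltac:(lia)) h1 h2; have := leq_trans h1 h2; lia.
set W' := W :\: [set y | ~~ G v y].
have dv := deg_le v sG.
have ep : nth 0 (compl_seq (degseq G)) p = n.-1 - c by rewrite nth_compl sz.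
have W'p : #|~: W'| <= (p + nth 0 (compl_seq (degseq G)) p).+1.
  rewrite ep /W' setCD cardsU.
  have -> : #|[set y | ~~ G v y]| = n - deg G v.
    have -> : [set y | ~~ G v y] = ~: [set y | G v y] by apply/setP => y; rewrite !inE.
    by have := cardsC [set y | G v y]; rewrite card_ord /deg; lia.
  rewrite /deg in dv cv *; lia.
have [A' [A'W cA' cnt]] := IH _ _ W'p.
have vA' : v \notin A'.
  apply/negP => /(subsetP A'W); by rewrite !inE irr.
have adj : forall a, a \in A' -> G v a.
  move=> a /(subsetP A'W); rewrite !inE; by case: (G v a).
exists (v |: A'); split.
- apply/subsetP => x; rewrite !inE => /orP [/eqP -> // | /(subsetP A'W)].
  by rewrite !inE => /andP [].
- apply/forallP => x; apply/implyP => xA; apply/forallP => y; apply/implyP => yA.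
  apply/implyP => xy; move: xA yA; rewrite !inE.
  case/orP => [/eqP ex | xA]; case/orP => [/eqP ey | yA].
  + by move: xy; rewrite ex ey eqxx.
  + by rewrite ex; apply: adj.
  + by rewrite ey sym; apply: adj.
  + by move/forallP: cA' => /(_ x); rewrite xA /= => /forallP /(_ y); rewrite yA xy.
- by rewrite cardsU1 vA'.
Qed.

Lemma clique_le_omega n (G : rel 'I_n) A : is_clique G A -> #|A| <= omega G.
Proof. move=> cA; rewrite /omega; exact: (leq_bigmax_cond (F := fun A : {set _} => #|A|) A cA). Qed.

Lemma clique_le_color n (G : rel 'I_n) A k : is_clique G A -> colorable G k -> #|A| <= k.
Proof.
move=> cA /existsP [f /forallP Hf].
have inj : {in A &, injective f}.
  move=> x y xA yA fxy; apply/eqP; apply: contraT => xy.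
  move/forallP: cA => /(_ x); rewrite xA /= => /forallP /(_ y); rewrite yA xy /= => Gxy.
  by move: (Hf x) => /forallP /(_ y); rewrite Gxy fxy eqxx.
rewrite -(card_in_imset inj); apply: leq_trans (max_card _) _; by rewrite card_ord.
Qed.

Lemma omega_le_chi n (G : rel 'I_n) : omega G <= chi G.
Proof.
rewrite /chi; apply: (big_ind (fun x => omega G <= x)).
- apply/bigmax_leqP => A _; apply: leq_trans (max_card _) _; by rewrite card_ord.
- by move=> x y hx hy; rewrite leq_min hx hy.
- move=> i ci; apply/bigmax_leqP => A cA; exact: clique_le_color cA ci.
Qed.

Lemma bigmin_le_seq (I : eqType) (r : seq I) (P : pred I) (F : I -> nat) x i :
  i \in r -> P i -> \big[minn/x]_(j <- r | P j) F j <= F i.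
Proof.
elim: r => //= a r IH; rewrite inE big_cons => /orP [/eqP <- -> | ir Pi].
  exact: geq_minl.
case: (P a); last exact: IH.
exact: leq_trans (geq_minr _ _) (IH ir Pi).
Qed.

Lemma multipartite_omega_chi n (G : rel 'I_n) k :
  complete_multipartite G k -> omega G = k /\ chi G = k.
Proof.
case=> p [surj Gp].
have kn : k <= n.
  have : [set p x | x in [set: 'I_n]] = [set: 'I_k].
    apply/setP => c; rewrite inE; have [x <-] := surj c; by rewrite imset_f.
  move=> E; have := leq_imset_card p [set: 'I_n]; by rewrite E !cardsT !card_ord.
have col : colorable G k.
  apply/existsP; exists [ffun x => p x]; apply/forallP => x; apply/forallP => y.
  by rewrite !ffunE Gp; apply/implyP.
have chik : chi G <= k.
  rewrite /chi; apply: (@leq_trans (nat_of_ord (Ordinal (kn : k < n.+1)))) => //.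
  apply: bigmin_le_seq => //; exact: mem_index_enum.
have Hs : forall c, exists x, p x == c by move=> c; have [x ?] := surj c; exists x; apply/eqP.
pose r c := xchoose (Hs c).
have pr : forall c, p (r c) = c by move=> c; apply/eqP; exact: (xchooseP (Hs c)).
have rinj : injective r by move=> c d e; rewrite -(pr c) -(pr d) e.
have cl : is_clique G [set r c | c in [set: 'I_k]].
  apply/forallP => x; apply/implyP => /imsetP [c _ ->]; apply/forallP => y.
  apply/implyP => /imsetP [d _ ->]; apply/implyP => cd; rewrite Gp !pr.
  by apply: contraNN cd => /eqP ->.
have ok : k <= omega G.
  have := clique_le_omega cl; by rewrite card_imset // cardsT card_ord.
have := omega_le_chi G; split; lia.
Qed.

Lemma gcount_mono (s t : seq nat) n : size s = n -> size t = n ->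
  (forall i j, i <= j -> j < n -> nth 0 t i <= nth 0 s j) ->
  forall fuel p q, q <= p -> gcount s fuel p <= gcount t fuel q.
Proof.
move=> ss st H; elim=> [|k IH] p q qp //=; rewrite ss st.
case: (ltnP p n) => pn //; have qn : q < n by lia.
rewrite qn ltnS; apply: IH; have := H q p qp pn; lia.
Qed.

Fixpoint blk (s : seq nat) (fuel p j : nat) : nat :=
  match fuel with
  | 0 => 0
  | k.+1 => if p < size s then
              (if j < (p + nth 0 s p).+1 then 0 else (blk s k (p + nth 0 s p).+1 j).+1)
            else 0
  end.

Section Blk.
Variable s : seq nat.
Local Notation n := (size s).

Lemma blk_lt fuel p j : n <= p + fuel -> p <= j < n -> blk s fuel p j < gcount s fuel p.
Proof.
elim: fuel p => [|k IH] p /= hf hj; first lia.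
case: (ltnP p (size s)) => pn; last lia.
case: (ltnP j (p + nth 0 s p).+1) => jl //; rewrite ltnS; apply: IH; lia.
Qed.

Lemma blk_surj fuel p c : n <= p + fuel -> c < gcount s fuel p ->
  exists j, p <= j < n /\ blk s fuel p j = c.
Proof.
elim: fuel p c => [|k IH] p c /= hf //.
case: (ltnP p (size s)) => pn // hc.
case: c hc => [|c] hc.
  exists p; split; first lia. by rewrite ltnS leq_addr.
have [|j [hj bj]] := IH (p + nth 0 s p).+1 c _ hc; first lia.
exists j; split; first lia.
by rewrite ltnNge (_ : (p + nth 0 s p).+1 <= j) ?bj //; lia.
Qed.

Lemma blk_block fuel p j : n <= p + fuel -> p <= j < n ->
  exists q, q <= j /\ forall j', p <= j' < n -> blk s fuel p j' = blk s fuel p j ->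
     q <= j' <= q + nth 0 s q.
Proof.
elim: fuel p j => [|k IH] p j /= hf hj; first lia.
case: (ltnP p (size s)) => pn; last lia.
case: (ltnP j (p + nth 0 s p).+1) => jl.
  exists p; split; first lia.
  move=> j' hj'; case: (ltnP j' (p + nth 0 s p).+1) => // jl' _; lia.
have h1 : n <= (p + nth 0 s p).+1 + k by lia.
have h2 : (p + nth 0 s p).+1 <= j < n by apply/andP; split; lia.
have [q [qj Hq]] := IH _ j h1 h2.
exists q; split => // j' hj'; case: (ltnP j' (p + nth 0 s p).+1) => // jl' [] e.
apply: Hq => //; lia.
Qed.
End Blk.

Lemma transport (P : forall m, rel 'I_m -> Prop) n (G : rel 'I_n) m :
  m = n -> P n G -> exists G' : rel 'I_m, P m G'.
Proof. by move=> e; subst; exists G. Qed.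

Theorem mainTheorem9 (pi : seq nat) :
  graphical pi ->
  (* (i) *)
  (forall G : rel 'I_(size pi), realizes G pi ->
     h pi <= omega G <= chi G) /\
  (* (ii) *)
  (forall pi' : seq nat, graphical pi' -> size pi' = size pi ->
     all2 leq pi pi' -> h pi <= h pi') /\
  (* (iii) *)
  (exists pi' : seq nat,
     [/\ graphical pi', size pi' = size pi, all2 leq pi pi' &
     exists G : rel 'I_(size pi'),
       [/\ realizes G pi', complete_multipartite G (h pi),
           omega G = h pi & chi G = h pi]]).
Proof.
case=> G0 [sG0 dG0].
set n := size pi.
have spi : sorted leq pi by rewrite -dG0; exact: degseq_sorted.
have pile : forall i, i < n -> nth 0 pi i <= n.-1.
  move=> i hi; have : nth 0 pi i \in degseq G0 by rewrite dG0 mem_nth.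
  rewrite /degseq mem_sort => /mapP [x _ ->]; exact: deg_le.
have hk : h pi = gcount (compl_seq pi) n 0 by rewrite /h /g size_compl.
have mono_e : forall i j, i <= j -> j < n -> nth 0 (compl_seq pi) i <= nth 0 (compl_seq pi) j.
  move=> i j ij jn; rewrite !nth_compl -/n; try lia.
  have := sorted_nth_le spi (_ : n - j.+1 <= n - i.+1) (_ : n - i.+1 < size pi).
  move=> /(_ ltac:(lia) ltac:(rewrite -/n; lia)); lia.
split; [|split].
- move=> G [sG dG]; apply/andP; split; last exact: omega_le_chi.
  have [|A [_ cA cnt]] := murphy sG (size (compl_seq (degseq G))) (p := 0) (W := setT).
    by rewrite setCT cards0.
  rewrite /h /g -dG; exact: leq_trans cnt (clique_le_omega cA).
- move=> pi' _ hsz; rewrite all2_leq_nth => /andP [_ /forallP Hle].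
  rewrite /h /g !size_compl hsz.
  apply: (gcount_mono (n := n)); rewrite ?size_compl ?hsz //.
  move=> i j ij jn; rewrite !nth_compl ?hsz -/n; try lia.
  have h1 := sorted_nth_le spi (_ : n - j.+1 <= n - i.+1) (_ : n - i.+1 < size pi).
  have h2 := Hle (Ordinal (_ : n - i.+1 < size pi)).
  move: h1 => /(_ ltac:(lia) ltac:(rewrite -/n; lia)) h1.
  move: h2 => /(_ ltac:(rewrite -/n; lia)) /= h2; lia.
set e := compl_seq pi.
have se : size e = n by rewrite size_compl.
have hf : size e <= 0 + n by rewrite se.
have blt : forall x : 'I_n, blk e n 0 (n.-1 - x) < h pi.
  move=> x; rewrite hk; apply: blk_lt; rewrite ?se //.
  apply/andP; split => //; have := ltn_ord x; lia.
pose part (x : 'I_n) : 'I_(h pi) := Ordinal (blt x).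
pose G (x y : 'I_n) := part x != part y.
have sG : simple_graph G by split; [move=> x; rewrite /G eqxx | move=> x y; rewrite /G eq_sym].
have cm : complete_multipartite G (h pi).
  exists part; split => // c.
  have hc : c < gcount e n 0 by rewrite -hk.
  have [j [hj bj]] := blk_surj hf hc.
  rewrite se in hj.
  have jn : n.-1 - j < n by lia.
  exists (Ordinal jn); apply: val_inj => /=.
  by rewrite (_ : n.-1 - (n.-1 - j) = j) //; lia.
have degb : forall x : 'I_n, nth 0 pi x <= deg G x.
  move=> x; have xn := ltn_ord x.
  have hj0 : 0 <= n.-1 - x < size e by rewrite se; apply/andP; split => //; lia.
  have [q [qj Hq]] := blk_block hf hj0.
  set B := [set y | part x == part y].
  have dB : deg G x = n - #|B|.
    have := cardsC B; rewrite card_ord /deg.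
    have -> : [set y | G x y] = ~: B by apply/setP => y; rewrite !inE.
    lia.
  have cB : #|B| <= nth 0 e q + 1.
    apply: (card_interval (L := n.-1 - q - nth 0 e q)) => y; rewrite inE => /eqP /(congr1 val) /= bxy.
    have yn := ltn_ord y.
    have := Hq (n.-1 - y) (_ : 0 <= n.-1 - y < size e); rewrite se bxy.
    move=> /(_ ltac:(apply/andP; split; lia) erefl); lia.
  have eq1 := mono_e q (n.-1 - x) qj ltac:(lia).
  have E1 := nth_compl (pi := pi) (j := n.-1 - x) ltac:(rewrite -/n; lia).
  rewrite -/n (_ : n - (n.-1 - x).+1 = x) in E1; last lia.
  rewrite -/e in E1.
  have := pile x xn; rewrite -/e in eq1; lia.
exists (degseq G); split.
- have TT := @transport (fun m (G' : rel 'I_m) => realizes G' (degseq G)) n G (size (degseq G)) (size_degseq G). by apply: TT; split.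
- by rewrite /degseq size_sort size_map size_enum_ord.
- rewrite all2_leq_nth size_degseq eqxx /=; apply/forallP => i.
  apply: sorted_ge_count; rewrite ?size_degseq //; first exact: degseq_sorted.
  rewrite count_degseq.
  apply: leq_trans (count_ge_sorted spi (ltn_ord i)) _.
  move: (nth 0 pi i) => c.
  have -> : count (leq c) pi = count (fun x : 'I_n => c <= nth 0 pi x) (enum 'I_n).
    rewrite -[in LHS](mkseq_nth 0 pi) /mkseq -/n -val_enum_ord -map_comp count_map.
    by apply: eq_count.
  rewrite -card_cnt; apply: subset_leq_card; apply/subsetP => x; rewrite !inE => hx.
  exact: leq_trans hx (degb x).
- have [om ch] := multipartite_omega_chi cm.
  have TT := @transport (fun m (G' : rel 'I_m) => [/\ realizes G' (degseq G), complete_multipartite G' (h pi),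
           omega G' = h pi & chi G' = h pi]) n G (size (degseq G)) (size_degseq G).
  by apply: TT.
Qed.
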